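(* Let $R$ be an associative $\mathbb{C}$-algebra and $W$ a left $R$-module. Let $M=(M_{ij})_{0\leq i,j\leq N}$ be an almost triangular matrix with entries in $R$, and let $\xi=(\xi_0,\ldots,\xi_N)^T\in W^{N+1}$ satisfy $M\xi=0$. Then $\det_{\mathrm{right}}(M^\tau)\,\xi_N=0$.
   Context: Almost triangular matrix. A matrix $M$ is almost triangular if $M_{ij}=0$ whenever $i>j+1$ and $M_{i+1,i}=-1$ for all $i$. Anti-diagonal transpose. $M^\tau$ denotes the matrix with $M^\tau_{ij}=M_{N-j,N-i}$. Right determinant. For a square matrix $X=(X_{ij})_{0\leq i,j\leq m}$ over $R$: - if $m=0$, $\det_{\mathrm{right}}X=X_{00}$; - otherwise $\det_{\mathrm{right}}X=\sum_{i=0}^mX_{im}C_{im}$, where $C_{im}=(-1)^{i+m}\det_{\mathrm{right}}X^{(i,m)}$, $X^{(i,m)}$ is $X$ with row $i$ and column $m$ deleted, and products are taken in the order written. *)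

(* Defs.v *)
From HB Require Import structures.
From mathcomp Require Import all_boot all_order all_algebra.
From mathcomp Require Import reals complex.
Set Implicit Arguments. Unset Strict Implicit. Unset Printing Implicit Defensive.
Import Order.TTheory GRing.Theory Num.Theory.
Local Open Scope ring_scope.

(* Matrices indexed by 0..N are 'M[R]_(N.+1). *)

Definition almost_triangular (R : pzRingType) (N : nat) (M : 'M[R]_N.+1) : Prop :=
  (forall i j : 'I_N.+1, (j.+1 < i)%N -> M i j = 0) /\
  (forall i j : 'I_N.+1, (i : nat) = j.+1 -> M i j = -1).

Definition antitr (R : Type) (N : nat) (M : 'M[R]_N.+1) : 'M[R]_N.+1 :=
  \matrix_(i, j) M (rev_ord j) (rev_ord i).

(* right determinant, expansion along the last column, products in the written order *)
Fixpoint detr (R : pzRingType) (m : nat) : 'M[R]_m.+1 -> R :=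
  match m return 'M[R]_m.+1 -> R with
  | 0 => fun X => X ord0 ord0
  | m'.+1 => fun X =>
      \sum_(i < m'.+2)
        X i ord_max * ((-1) ^+ (i + m'.+1) * detr (row' i (col' ord_max X)))
  end.

(* Main.v *)
Require Import Defs.
From HB Require Import structures.
From mathcomp Require Import all_boot all_order all_algebra.
From mathcomp Require Import reals complex.
From mathcomp Require Import zify.
Import GRing.Theory Num.Theory.
Local Open Scope ring_scope.

Section Aux.
Variables (R : pzRingType) (W : lmodType R).

Lemma detr_zero_row m (X : 'M[R]_m.+1) r : (forall c, X r c = 0) -> detr X = 0.
Proof.
elim: m X r => [|m IH] X r H /=.
  by rewrite (ord1 r) in H; apply: H.
rewrite big1 // => i _.
case: (unliftP i r) H => [r' ->|->] H.
  by rewrite (IH _ r') ?mulr0 ?mul0r // => c; rewrite !mxE H.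
by rewrite H mul0r.
Qed.

Lemma detr_lastrow n (Y : 'M[R]_n.+2) :
  (forall c : 'I_n.+2, c != ord_max -> Y ord_max c = 0) ->
  detr Y = Y ord_max ord_max * detr (row' ord_max (col' ord_max Y)).
Proof.
move=> H /=; rewrite big_ord_recr /= big1 ?add0r.
  by rewrite -signr_odd addnn odd_double expr0 mul1r.
move=> i _; rewrite (@detr_zero_row _ _ ord_max) ?mulr0 // => c; rewrite !mxE.
have -> : lift (widen_ord (leqnSn n.+1) i) ord_max = ord_max.
  by apply/val_inj; rewrite /= /bump; have := ltn_ord i; lia.
apply: H; apply/eqP => /(congr1 val) /=; rewrite /bump; have := ltn_ord c; lia.
Qed.

Definition recP m (X : 'M[R]_m.+1) (y : nat -> W) :=
  forall k : 'I_m.+1, \sum_(i < m.+1) X i k *: y i = if k == ord_max then y m.+1 else 0.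
Arguments recP {m}.
Definition PA m := forall X : 'M[R]_m.+1, almost_triangular X ->
  forall y, recP X y -> detr X *: y 0%N = y m.+1.
Definition PQ m := forall X : 'M[R]_m.+2, almost_triangular X -> forall y, recP X y ->
  forall i : 'I_m.+2, ((-1)^+(i + m.+1) * detr (row' i (col' ord_max X))) *: y 0%N = y i.

Lemma val_lift_max n (i : 'I_n) : val (lift ord_max i) = i.
Proof. by rewrite /= /bump leqNgt ltn_ord. Qed.

Lemma lead_AT m (X : 'M[R]_m.+2) : almost_triangular X ->
  almost_triangular (row' ord_max (col' ord_max X)).
Proof.
case=> H1 H2; split=> i j h; rewrite !mxE.
  by apply: H1; rewrite !val_lift_max.
by apply: H2; rewrite !val_lift_max.
Qed.

Lemma lead_rec m (X : 'M[R]_m.+2) y : almost_triangular X -> recP X y ->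
  recP (row' ord_max (col' ord_max X)) y.
Proof.
case=> H1 H2 H k; have := H (lift ord_max k).
rewrite big_ord_recr /=.
have -> : (lift ord_max k == ord_max) = false.
  apply/negbTE/eqP => /(congr1 val); rewrite val_lift_max /=; have := ltn_ord k; lia.
have E : \sum_(i < m.+1) X (widen_ord (leqnSn m.+1) i) (lift ord_max k) *: y i
   = \sum_(i < m.+1) (row' ord_max (col' ord_max X)) i k *: y i.
  apply: eq_bigr => i _; rewrite !mxE; congr (X _ _ *: _).
  by apply/val_inj; rewrite val_lift_max.
rewrite E; case: eqP => [->|kn] h.
  rewrite H2 in h; last by rewrite val_lift_max.
  by apply/eqP; rewrite -subr_eq0 -scaleN1r h.
rewrite H1 ?scale0r ?addr0 in h => //.
rewrite val_lift_max /=; have := ltn_ord k.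
have : (k : nat) != m by apply/eqP => e; apply: kn; apply/val_inj.
lia.
Qed.

Lemma PA0 : PA 0.
Proof.
move=> X _ y H /=; have := H ord0; rewrite big_ord1 /=.
by [].
Qed.

Lemma PA_S m : PQ m -> PA m.+1.
Proof.
move=> HQ X AT y H /=.
have := H ord_max; rewrite eqxx => <-; rewrite scaler_suml; apply: eq_bigr => i _.
by rewrite -scalerA HQ.
Qed.

Lemma Q_last m (X : 'M[R]_m.+2) y : PA m -> almost_triangular X -> recP X y ->
  ((-1)^+(@ord_max m.+1 + m.+1) * detr (row' ord_max (col' ord_max X))) *: y 0%N = y m.+1.
Proof.
move=> HA AT H.
rewrite (_ : (-1) ^+ _ = 1) ?mul1r; last by rewrite -signr_odd oddD /= addbb.
by apply: HA; [apply: lead_AT | apply: lead_rec].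
Qed.

Lemma PQ0 : PQ 0.
Proof.
move=> X [H1 H2] y H i.
case: (unliftP ord_max i) => [j ->|->]; last by apply: Q_last => //; apply: PA0.
rewrite (ord1 j) /=.
have -> : lift ord_max (@ord0 0) = ord0 by apply/val_inj.
rewrite !mxE H2 /=; last first.
  by rewrite /bump.
by rewrite expr1 mulN1r opprK scale1r.
Qed.

Lemma PQ_S m : PQ m -> PQ m.+1.
Proof.
move=> HQ X AT y H i.
have HA := @PA_S m HQ.
case: (unliftP ord_max i) => [j ->|->]; last by apply: Q_last.
set Y := row' _ _.
have AT' := AT; case: AT' => H1 H2.
have Lmax : lift (lift ord_max j) ord_max = ord_max.
  have Hj : (j <= m.+1)%N by rewrite -ltnS. 
  by apply/val_inj; rewrite /= /bump ltnNge Hj /= Hj.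
rewrite (@detr_lastrow _ Y); last first.
  move=> c cn; rewrite /Y !mxE Lmax H1 //.
  have : (c : nat) != m.+1 by apply/eqP => e; move/eqP: cn; apply; apply/val_inj.
  rewrite val_lift_max /=; have := ltn_ord c; lia.
have -> : Y ord_max ord_max = -1.
  by rewrite /Y !mxE Lmax H2 // val_lift_max.
have -> : row' ord_max (col' ord_max Y) =
   row' j (col' ord_max (row' ord_max (col' ord_max X))).
  apply/matrixP => r c; rewrite !mxE; congr (X _ _).
    have Hr : (r <= m)%N by rewrite -ltnS. have Hj : (j <= m.+1)%N by rewrite -ltnS.
    apply/val_inj; rewrite /= /bump (ltnNge m.+1 j) Hj (ltnNge m r) Hr /= !add0n.
    rewrite ltnNge (_ : ((j <= r) + r <= m.+1)%N) //.
    by case: (j <= r)%N; rewrite ?add0n ?add1n ?ltnS // (leq_trans Hr).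
have := HQ _ (@lead_AT _ _ AT) y (@lead_rec _ _ _ AT H) j.
rewrite val_lift_max => <-; congr (_ *: _).
by rewrite !addnS !exprS !mulN1r !mulNr !mulrN opprK.
Qed.

Lemma PA_all m : PA m /\ PQ m.
Proof.
elim: m => [|m [_ HQ]]; first by split; [apply: PA0 | apply: PQ0].
by split; [apply: PA_S | apply: PQ_S].
Qed.

End Aux.

Theorem lemma1p1p4 (Rr : realType) (R : algType (Rr[i])) (W : lmodType R)
    (N : nat) (M : 'M[R]_N.+1) (xi : 'I_N.+1 -> W) :
  almost_triangular M ->
  (forall i : 'I_N.+1, \sum_(j < N.+1) M i j *: xi j = 0) ->
  detr (antitr M) *: xi ord_max = 0.
Proof.
move=> [H1 H2] Hxi.
pose y n := if (n <= N)%N then xi (inord (N - n)) else (0 : W).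
have yE (i : 'I_N.+1) : y i = xi (rev_ord i).
  rewrite /y -ltnS ltn_ord; congr xi; apply/val_inj.
  by rewrite /= inordK //; have := ltn_ord i; lia.
have AT : almost_triangular (antitr M).
  split=> i j h; rewrite !mxE.
    by apply: H1 => /=; have := ltn_ord i; have := ltn_ord j; lia.
  by apply: H2 => /=; have := ltn_ord i; have := ltn_ord j; lia.
have rec : @recP R W N (antitr M) y.
  move=> k; have := Hxi (rev_ord k); rewrite (reindex_inj rev_ord_inj) /= => e.
  rewrite (_ : (if _ then _ else _) = 0); last by case: ifP => // _; rewrite /y ltnn.
  rewrite -[RHS]e; apply: eq_bigr => i _; by rewrite !mxE yE.
have := (proj1 (PA_all R W N)) _ AT y rec.
rewrite {2}/y ltnn => <-; rewrite /y leq0n subn0; congr (_ *: xi _).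
by apply/val_inj; rewrite /= inordK.
Qed.
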